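(* Let $|\cdot|$ denote the Euclidean norm on $\mathbb{R}^n$ and $\langle\cdot,\cdot\rangle$ the Euclidean inner product. Let $l_0,l_1,\bar l_0,\bar l_1\in\mathbb{R}^n$ satisfy the two sticks condition $$|l_1-\bar l_0|\ge |l_1-l_0|\quad\text{and}\quad |\bar l_1-l_0|\ge |\bar l_1-\bar l_0|.$$ Then $$\langle l_1-\bar l_1,\ l_0-\bar l_0\rangle\ge 0.$$ Consequently, for every $0\le t\le 1$, writing $l_t=(1-t)l_0+tl_1$ and $\bar l_t=(1-t)\bar l_0+t\bar l_1$, $$(1-t)^2|l_0-\bar l_0|^2+t^2|l_1-\bar l_1|^2\le |l_t-\bar l_t|^2.$$
   Context: The points $l_0,l_1$ are the initial and terminal points of the directed segment (''stick'') $[l_0,l_1]$, and similarly for $[\bar l_0,\bar l_1]$; the sticks need not have equal length. *)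

(* Defs.v *)
From HB Require Import structures.
From mathcomp Require Import all_boot all_order all_algebra.
From mathcomp Require Import reals.
Set Implicit Arguments. Unset Strict Implicit. Unset Printing Implicit Defensive.
Import Order.TTheory GRing.Theory Num.Theory.
Local Open Scope ring_scope.

Definition dotv (R : realType) (n : nat) (u v : 'rV[R]_n) : R :=
  \sum_(i < n) u 0 i * v 0 i.

Definition enorm (R : realType) (n : nat) (u : 'rV[R]_n) : R :=
  Num.sqrt (dotv u u).

(* Main.v *)
Require Import Defs.
From HB Require Import structures.
From mathcomp Require Import all_boot all_order all_algebra.
From mathcomp Require Import reals.
From mathcomp Require Import ring lra.
Import Order.TTheory GRing.Theory Num.Theory.
Local Open Scope ring_scope.

Lemma dotv_ge0 (R : realType) (n : nat) (x : 'rV[R]_n) : 0 <= dotv x x.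
Proof. by apply: sumr_ge0 => i _; rewrite -expr2 sqr_ge0. Qed.

Lemma enorm_sq (R : realType) (n : nat) (x : 'rV[R]_n) : enorm x ^+ 2 = dotv x x.
Proof. by rewrite /enorm sqr_sqrtr // dotv_ge0. Qed.

Lemma enorm_le (R : realType) (n : nat) (x y : 'rV[R]_n) :
  enorm x <= enorm y -> dotv x x <= dotv y y.
Proof. by rewrite /enorm ler_sqrt // dotv_ge0. Qed.

Lemma ptA (R : realType) (a b c d : R) : 2 * ((b - d) * (a - c)) =
  (b - c) * (b - c) + (d - a) * (d - a) - (b - a) * (b - a) - (d - c) * (d - c).
Proof. ring. Qed.

Lemma ptB (R : realType) (t a b c d : R) :
  ((1 - t) * a + t * b - ((1 - t) * c + t * d)) *
  ((1 - t) * a + t * b - ((1 - t) * c + t * d)) =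
  (1 - t) ^+ 2 * ((a - c) * (a - c)) + t ^+ 2 * ((b - d) * (b - d))
  + 2 * (t * (1 - t)) * ((b - d) * (a - c)).
Proof. ring. Qed.

Theorem proposition3p1 (R : realType) (n : nat) (l0 l1 lb0 lb1 : 'rV[R]_n) :
  enorm (l1 - lb0) >= enorm (l1 - l0) ->
  enorm (lb1 - l0) >= enorm (lb1 - lb0) ->
  0 <= dotv (l1 - lb1) (l0 - lb0) /\
  (forall t : R, 0 <= t <= 1 ->
     (1 - t) ^+ 2 * enorm (l0 - lb0) ^+ 2 + t ^+ 2 * enorm (l1 - lb1) ^+ 2
     <= enorm (((1 - t) *: l0 + t *: l1) - ((1 - t) *: lb0 + t *: lb1)) ^+ 2).
Proof.
move=> /enorm_le H1 /enorm_le H2.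
have key : 2 * dotv (l1 - lb1) (l0 - lb0) =
  dotv (l1 - lb0) (l1 - lb0) + dotv (lb1 - l0) (lb1 - l0)
  - dotv (l1 - l0) (l1 - l0) - dotv (lb1 - lb0) (lb1 - lb0).
  rewrite /dotv mulr_sumr -big_split -!sumrB /=.
  by apply: eq_bigr => i _; rewrite !mxE; apply: ptA.
have D : 0 <= dotv (l1 - lb1) (l0 - lb0).
  have : 0 <= 2 * dotv (l1 - lb1) (l0 - lb0) by rewrite key; lra.
  lra.
split=> // t /andP [t0 t1].
rewrite !enorm_sq.
have E : dotv ((1 - t) *: l0 + t *: l1 - ((1 - t) *: lb0 + t *: lb1))
   ((1 - t) *: l0 + t *: l1 - ((1 - t) *: lb0 + t *: lb1)) =
  (1 - t) ^+ 2 * dotv (l0 - lb0) (l0 - lb0) + t ^+ 2 * dotv (l1 - lb1) (l1 - lb1)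
  + 2 * (t * (1 - t)) * dotv (l1 - lb1) (l0 - lb0).
  rewrite /dotv !mulr_sumr -!big_split /=.
  by apply: eq_bigr => i _; rewrite !mxE; apply: ptB.
rewrite E.
have : 0 <= 2 * (t * (1 - t)) * dotv (l1 - lb1) (l0 - lb0).
  by apply: mulr_ge0 => //; apply: mulr_ge0 => //; apply: mulr_ge0; lra.
lra.
Qed.
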